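(* In the setting of the context, under (A1) and (A2), the piecewise constant discrete derivatives $\tilde w^n_x=(\tilde v^n_x,\tilde u^n_x)$ satisfy $$\|w^n_x-\tilde w^n_x\|_{L^2}=O(\varepsilon^2\Delta x),$$ where $w^n_x=(v_x(\cdot,t^n),u_x(\cdot,t^n))$ is the exact derivative.
   Context: $\Omega=[0,1]$; $(v,u)$ solves $v_t-u_x=0$, $u_t-\varepsilon^{-2}v_x=g$ on $\Omega\times\mathbb{R}^+$ with $v=0$ on $\partial\Omega$, $0<\varepsilon<1$. Uniform mesh $\Omega_i=[x_i,x_{i+1}]$, $i=1,\dots,N_x$, width $\Delta x$, midpoints $\bar x_i$; $t^n=n\Delta t$; $v_i^n=v(\bar x_i,t^n)$, $u_i^n=u(\bar x_i,t^n)$. On $\Omega_i$: $\tilde v^n_x=\frac1{2\Delta x}\big(v^n_{i+1}-v^n_{i-1}+\frac{\Delta x}{\Delta t}(u^n_{i+1}+u^n_{i-1}-2u^n_i)\big)$, $\tilde u^n_x=\frac1{2\Delta x}\big(u^n_{i+1}-u^n_{i-1}+\frac{\Delta x}{\Delta t}(v^n_{i+1}+v^n_{i-1}-2v^n_i)\big)$. (A1) $u,v$ sufficiently smooth with $v=\varepsilon^2v^{(2)}+O(\varepsilon^3)$, $u_x=\varepsilon^2u^{(2)}_x+O(\varepsilon^3)$ in the norm $\|\varphi\|_{C^1}=\|\varphi\|_\infty+\|\nabla_{x,t}\varphi\|_\infty$, with $\varepsilon$-independent smooth $v^{(2)},u^{(2)}$. (A2) $\Delta t=\widehat{\mathrm{CFL}}\,\Delta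 x$ with fixed $0<\widehat{\mathrm{CFL}}<1$. $O(\cdot)$: bounded by a constant independent of $\varepsilon,\Delta t,\Delta x$ times the expression. *)

(* Defs.v *)
From Stdlib Require Import Reals Lra Lia.
From Coquelicot Require Import Coquelicot.
Open Scope R_scope.

Definition dx_ (f : R -> R -> R) (x t : R) : R := Derive (fun y => f y t) x.
Definition dt_ (f : R -> R -> R) (x t : R) : R := Derive (fun s => f x s) t.

Definition in_dom (x t : R) : Prop := 0 <= x <= 1 /\ 0 <= t.

(* phi has C^1 size at most B on Omega x R^+ (sup of |phi|, |phi_x|, |phi_t|).
   This is equivalent, up to a fixed factor, to ||phi||_{C^1} <= B. *)
Definition C1_le (phi : R -> R -> R) (B : R) : Prop :=
  forall x t, in_dom x t ->
    Rabs (phi x t) <= B /\ Rabs (dx_ phi x t) <= B /\ Rabs (dt_ phi x t) <= B.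

(* Uniform mesh of [0,1] with N cells: Omega_i = [x_i, x_{i+1}], i = 1..N,
   x_i = (i-1) dx, midpoint xbar_i = (i - 1/2) dx. *)
Definition node (dx : R) (i : nat) : R := (INR i - 1) * dx.
Definition mid (dx : R) (i : nat) : R := (INR i - / 2) * dx.

(* Cell values f_i = f(xbar_i), i = 1..N, with ghost values at i = 0 and
   i = N+1 obtained by reflection with sign s (s = -1 for v, odd reflection
   compatible with v = 0 on the boundary; s = 1 for u, even reflection). *)
Definition cellval (s : R) (f : R -> R) (N : nat) (dx : R) (i : nat) : R :=
  if Nat.eqb i 0 then s * f (mid dx 1)
  else if Nat.eqb i (S N) then s * f (mid dx N)
  else f (mid dx i).

Definition dtilde (a b : nat -> R) (dx dt : R) (i : nat) : R :=
  / (2 * dx) * (a (S i) - a (i - 1)%nat + dx / dt * (b (S i) + b (i - 1)%nat - 2 * b i)).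

Fixpoint sum1 (F : nat -> R) (n : nat) : R :=
  match n with
  | O => 0
  | S m => sum1 F m + F (S m)
  end.

Definition L2err (v u : R -> R -> R) (N : nat) (dx dt tn : R) : R :=
  let V := cellval (-1) (fun x => v x tn) N dx in
  let U := cellval 1 (fun x => u x tn) N dx in
  sqrt (sum1 (fun i =>
    RInt (fun x => (dx_ v x tn - dtilde V U dx dt i) ^ 2
                 + (dx_ u x tn - dtilde U V dx dt i) ^ 2)
         (node dx i) (node dx (S i))) N).

(* Main.v *)
Require Import Defs.
From Stdlib Require Import Reals Lra Lia.
From Coquelicot Require Import Coquelicot.
Open Scope R_scope.

Lemma mvt_bound (f : R -> R) (a b B : R) :
  (forall x, ex_derive f x) ->
  (forall c, Rmin a b <= c <= Rmax a b -> Rabs (Derive f c) <= B) ->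
  Rabs (f b - f a) <= B * Rabs (b - a).
Proof.
  intros Hd HB.
  destruct (MVT_gen f a b (Derive f)) as [c [Hc Heq]].
  - intros x _. apply Derive_correct, Hd.
  - intros x _. apply continuity_pt_filterlim. apply (ex_derive_continuous (K:=R_AbsRing) (V:=R_NormedModule) f x), Hd.
  - rewrite Heq, Rabs_mult. apply Rmult_le_compat_r. apply Rabs_pos. apply HB, Hc.
Qed.

Lemma mvt_eq (f : R -> R) (a b : R) :
  (forall x, ex_derive f x) ->
  exists c, Rmin a b <= c <= Rmax a b /\ f b - f a = Derive f c * (b - a).
Proof.
  intros Hd.
  apply (MVT_gen f a b (Derive f)).
  - intros x _. apply Derive_correct, Hd.
  - intros x _. apply continuity_pt_filterlim. apply (ex_derive_continuous (K:=R_AbsRing) (V:=R_NormedModule) f x), Hd.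
Qed.

Lemma fd_err (f : R -> R) (Lam h a b c : R) :
  (forall x, ex_derive f x) -> 0 <= Lam ->
  (forall p q, 0 <= p <= 1 -> 0 <= q <= 1 -> Rabs (Derive f p - Derive f q) <= Lam * Rabs (p - q)) ->
  0 <= a <= 1 -> 0 <= b <= 1 -> 0 <= c <= 1 ->
  Rabs (a - c) <= 2 * h -> Rabs (b - c) <= 2 * h -> Rabs (b - a) <= 2 * h ->
  Rabs (f b - f a - Derive f c * (b - a)) <= 8 * Lam * h ^ 2.
Proof.
  intros Hd HL Hlip Ha Hb Hc H1 H2 H3.
  destruct (mvt_eq f a b Hd) as [x [Hx Heq]].
  rewrite Heq.
  replace (Derive f x * (b - a) - Derive f c * (b - a)) with ((Derive f x - Derive f c) * (b - a)) by ring.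
  rewrite Rabs_mult.
  assert (Hx01 : 0 <= x <= 1).
  { unfold Rmin, Rmax in Hx. destruct (Rle_dec a b); lra. }
  assert (Hxc : Rabs (x - c) <= 2 * h).
  { unfold Rmin, Rmax in Hx. destruct (Rle_dec a b);
    apply Rabs_le; apply Rabs_le_between in H1; apply Rabs_le_between in H2; lra. }
  assert (0 <= h) by (pose proof (Rabs_pos (b - a)); lra).
  specialize (Hlip x c Hx01 Hc).
  assert (Rabs (Derive f x - Derive f c) <= Lam * (2*h)).
  { eapply Rle_trans; [apply Hlip|]. apply Rmult_le_compat_l; lra. }
  pose proof (Rabs_pos (Derive f x - Derive f c)).
  pose proof (Rabs_pos (b - a)).
  nra.
Qed.

Lemma deriv_zero_right (f : R -> R) t l : 0 <= t -> (forall s, 0 <= s -> f s = 0) ->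
  is_derive f t l -> l = 0.
Proof.
  intros Ht Hf Hd. apply is_derive_Reals in Hd.
  destruct (Req_dec l 0) as [|Hl]; auto. exfalso.
  assert (He : 0 < Rabs l) by (apply Rabs_pos_lt; auto).
  destruct (Hd (Rabs l) He) as [d Hdd].
  assert (Hd0 := cond_pos d).
  assert (Hh : d / 2 <> 0) by lra.
  assert (Hh2 : Rabs (d/2) < d) by (rewrite Rabs_pos_eq; lra).
  specialize (Hdd (d/2) Hh Hh2).
  rewrite !Hf in Hdd by lra.
  replace ((0 - 0) / (d/2) - l) with (- l) in Hdd by (field; lra).
  rewrite Rabs_Ropp in Hdd. lra.
Qed.

Lemma abs_q (a b B : R) : Rabs (a - b) <= B -> b - B <= a <= b + B.
Proof. intros H. apply Rabs_le_between in H. lra. Qed.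

Lemma dt_lip (w : R -> R -> R) (B t x y : R) :
  (forall z s, ex_derive (fun y => w y s) z) ->
  (forall z s, ex_derive (fun s => w z s) s) ->
  (forall z s, ex_derive (fun s => dx_ w z s) s) ->
  (forall z s, 0 <= z <= 1 -> 0 <= s -> Rabs (dt_ (dx_ w) z s) <= B) ->
  0 <= t -> 0 <= x <= 1 -> 0 <= y <= 1 ->
  Rabs (dt_ w x t - dt_ w y t) <= B * Rabs (x - y).
Proof.
  intros Hwx Hwt Hwxt HB Ht Hx Hy.
  assert (S1 : forall z h, 0 <= z <= 1 -> 0 < h ->
            Rabs (dx_ w z (t+h) - dx_ w z t) <= B * h).
  { intros z h Hz Hh.
    replace h with (Rabs (t + h - t)) at 2 by (rewrite Rabs_pos_eq; lra).
    apply (mvt_bound (fun s => dx_ w z s)); auto.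
    intros c Hc. apply HB; auto. unfold Rmin in Hc; destruct (Rle_dec t (t+h)); lra. }
  assert (S2 : forall h, 0 < h ->
     Rabs ((w x (t+h) - w x t) - (w y (t+h) - w y t)) <= (B*h) * Rabs (x - y)).
  { intros h Hh.
    apply (mvt_bound (fun z => w z (t+h) - w z t)).
    - intros z. apply (ex_derive_minus (fun z => w z (t+h)) (fun z => w z t)); auto.
    - intros c Hc. rewrite Derive_minus by auto.
      apply S1; auto. unfold Rmin, Rmax in Hc; destruct (Rle_dec y x); lra. }
  destruct (Rle_dec (Rabs (dt_ w x t - dt_ w y t)) (B * Rabs (x - y))) as [|Hn]; auto.
  exfalso. apply Rnot_le_lt in Hn.
  set (eps := (Rabs (dt_ w x t - dt_ w y t) - B * Rabs (x - y)) / 3).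
  assert (He : 0 < eps) by (unfold eps; lra).
  assert (Dx : derivable_pt_lim (fun s => w x s) t (dt_ w x t)) by (apply is_derive_Reals, Derive_correct, Hwt).
  assert (Dy : derivable_pt_lim (fun s => w y s) t (dt_ w y t)) by (apply is_derive_Reals, Derive_correct, Hwt).
  destruct (Dx eps He) as [d1 Hd1]. destruct (Dy eps He) as [d2 Hd2].
  set (h := Rmin d1 d2 / 2).
  assert (Hp1 := cond_pos d1). assert (Hp2 := cond_pos d2).
  assert (Hh : 0 < h) by (unfold h, Rmin; destruct (Rle_dec d1 d2); lra).
  assert (Hh1 : Rabs h < d1) by (rewrite Rabs_pos_eq by lra; unfold h, Rmin; destruct (Rle_dec d1 d2); lra).
  assert (Hh2 : Rabs h < d2) by (rewrite Rabs_pos_eq by lra; unfold h, Rmin; destruct (Rle_dec d1 d2); lra).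
  specialize (Hd1 h ltac:(lra) Hh1). specialize (Hd2 h ltac:(lra) Hh2).
  specialize (S2 h Hh).
  set (qx := (w x (t + h) - w x t) / h) in *.
  set (qy := (w y (t + h) - w y t) / h) in *.
  assert (Hq : Rabs (qx - qy) <= B * Rabs (x - y)).
  { replace ((w x (t+h) - w x t) - (w y (t+h) - w y t)) with (h * (qx - qy)) in S2
      by (unfold qx, qy; field; lra).
    rewrite Rabs_mult, (Rabs_pos_eq h) in S2 by lra.
    apply (Rmult_le_reg_l h); lra. }
  apply Rabs_def2 in Hd1. apply Rabs_def2 in Hd2. apply abs_q in Hq.
  unfold eps in *.
  destruct (Rcase_abs (dt_ w x t - dt_ w y t)) as [Hs|Hs];
    [rewrite Rabs_left in * by lra | rewrite Rabs_right in * by lra].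
  all: lra.
Qed.


Lemma alg (d a0 a1 b0 b1 b2 h CFL Lam : R) : 0 < h -> 0 < CFL -> 0 <= Lam ->
  Rabs ((a1 - a0) - 2 * h * d) <= 24 * Lam * h ^ 2 ->
  Rabs (b1 + b0 - 2 * b2) <= 32 * Lam * h ^ 2 ->
  Rabs (d - / (2 * h) * (a1 - a0 + h / (CFL * h) * (b1 + b0 - 2 * b2)))
    <= (24 + 32 / CFL) / 2 * Lam * h.
Proof.
  intros Hh Hc HL HA HS.
  replace (d - / (2 * h) * (a1 - a0 + h / (CFL * h) * (b1 + b0 - 2 * b2)))
    with (/ (2 * h) * (- ((a1 - a0) - 2 * h * d) - / CFL * (b1 + b0 - 2 * b2)))
    by (field; lra).
  rewrite Rabs_mult, Rabs_pos_eq by (apply Rlt_le, Rinv_0_lt_compat; lra).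
  apply Rabs_le_between in HA. apply Rabs_le_between in HS.
  set (A := (a1 - a0) - 2 * h * d) in *.
  set (S := b1 + b0 - 2 * b2) in *.
  assert (Hi : 0 < / CFL) by (apply Rinv_0_lt_compat; lra).
  assert (HB : Rabs (- A - / CFL * S) <= 24 * Lam * h ^ 2 + / CFL * (32 * Lam * h ^ 2)).
  { apply Rabs_le. nra. }
  apply (Rmult_le_reg_l (2 * h)). lra.
  rewrite <- Rmult_assoc, Rinv_r, Rmult_1_l by lra.
  unfold Rdiv. nra.
Qed.

Lemma fd' (f : R -> R) (Lam h a b c : R) :
  (forall x, ex_derive f x) -> 0 <= Lam ->
  (forall p q, 0 <= p <= 1 -> 0 <= q <= 1 -> Rabs (Derive f p - Derive f q) <= Lam * Rabs (p - q)) ->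
  0 <= a <= 1 -> 0 <= b <= 1 -> 0 <= c <= 1 ->
  -2*h <= a - c <= 2 * h -> -2*h <= b - c <= 2 * h -> -2*h <= b - a <= 2 * h ->
  - (8 * Lam * h ^ 2) <= f b - f a - Derive f c * (b - a) <= 8 * Lam * h ^ 2.
Proof.
  intros. apply Rabs_le_between. apply fd_err; auto; apply Rabs_le; lra.
Qed.

Lemma cv_in s f N h j : (1 <= j <= N)%nat -> cellval s f N h j = f (mid h j).
Proof.
  intros Hj. unfold cellval.
  destruct (Nat.eqb_spec j 0); [lia|]. destruct (Nat.eqb_spec j (S N)); [lia|]. auto.
Qed.
Lemma cv_0 s f N h : cellval s f N h 0 = s * f (mid h 1).
Proof. reflexivity. Qed.
Lemma cv_N s f N h : cellval s f N h (S N) = s * f (mid h N).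
Proof. unfold cellval. simpl. rewrite Nat.eqb_refl. auto. Qed.

Lemma lip_abs (g : R -> R) Lam p q : 0 <= p <= 1 -> 0 <= q <= 1 ->
  (forall p q, 0 <= p <= 1 -> 0 <= q <= 1 -> Rabs (g p - g q) <= Lam * Rabs (p - q)) ->
  0 <= Lam -> -(Lam * Rabs (p - q)) <= g p - g q <= Lam * Rabs (p - q).
Proof. intros. apply Rabs_le_between. auto. Qed.

Ltac fdF F Lam HdF HL HlF h a b c := let H := fresh "E" in
  pose proof (fd' F Lam h a b c HdF HL HlF ltac:(lra) ltac:(lra) ltac:(lra) ltac:(lra) ltac:(lra) ltac:(lra)) as H.
Ltac fdU U Lam HdU HL HlU h a b c := let H := fresh "E" in
  pose proof (fd' U Lam h a b c HdU HL HlU ltac:(lra) ltac:(lra) ltac:(lra) ltac:(lra) ltac:(lra) ltac:(lra)) as H.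

Lemma core (F U : R -> R) (Lam CFL : R)
  (HdF : forall p, ex_derive F p) (HdU : forall p, ex_derive U p)
  (HL : 0 <= Lam) (HC : 0 < CFL)
  (HlF : forall p q, 0 <= p <= 1 -> 0 <= q <= 1 -> Rabs (Derive F p - Derive F q) <= Lam * Rabs (p - q))
  (HlU : forall p q, 0 <= p <= 1 -> 0 <= q <= 1 -> Rabs (Derive U p - Derive U q) <= Lam * Rabs (p - q))
  (F0 : F 0 = 0) (F1 : F 1 = 0) (U0 : Derive U 0 = 0) (U1 : Derive U 1 = 0)
  (N i : nat) (x : R) : (1 <= i <= N)%nat ->
  let h := / INR N in node h i <= x <= node h (S i) ->
  Rabs (Derive F x - dtilde (cellval (-1) F N h) (cellval 1 U N h) h (CFL * h) i)
    <= (24 + 32 / CFL) / 2 * Lam * h /\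
  Rabs (Derive U x - dtilde (cellval 1 U N h) (cellval (-1) F N h) h (CFL * h) i)
    <= (24 + 32 / CFL) / 2 * Lam * h.
Proof.
  intros Hi h Hx.
  assert (HN : 0 < INR N) by (apply lt_0_INR; lia).
  assert (Hh : 0 < h) by (apply Rinv_0_lt_compat; auto).
  assert (HNh : INR N * h = 1) by (unfold h; field; lra).
  set (p := node h i) in *.
  assert (Hp : p = (INR i - 1) * h) by reflexivity.
  assert (Hx2 : x <= p + h) by (unfold node in Hx; rewrite S_INR in Hx; unfold p, node; lra).
  assert (Hp0 : 0 <= p).
  { rewrite Hp. apply Rmult_le_pos; [|lra]. assert (1 <= INR i) by (apply (le_INR 1); lia). lra. }
  assert (Hp1 : p + h <= 1).
  { rewrite Hp, <- HNh. assert (INR i <= INR N) by (apply le_INR; lia). nra. }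
  assert (Mi : mid h i = p + h / 2) by (rewrite Hp; unfold mid; field).
  assert (MS : mid h (S i) = p + 3 * h / 2) by (rewrite Hp; unfold mid; rewrite S_INR; field).
  unfold dtilde.
  replace (h / (CFL * h)) with (h / (CFL * h)) by auto.
  destruct Hi as [Hi1 HiN].
  destruct (Nat.eq_dec i 1) as [Ei1|Ni1]; destruct (Nat.eq_dec i N) as [EiN|NiN].
  -
    subst i. assert (EN : N = 1%nat) by lia. subst N.
    assert (h1 : h = 1) by (unfold h; change (INR 1) with 1; apply Rinv_1).
    assert (p0 : p = 0) by (rewrite Hp; change (INR 1) with 1; ring).
    simpl (1 - 1)%nat. rewrite !cv_0, !cv_N, !cv_in by lia.
    assert (M1 : mid h 1 = 1/2) by (unfold mid; simpl; rewrite h1; field).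
    rewrite M1.
    fdF F Lam HdF HL HlF h 0 1 x. fdF F Lam HdF HL HlF h 0 (1/2) x. fdF F Lam HdF HL HlF h 1 (1/2) x.
    pose proof (lip_abs (Derive U) Lam x 0 ltac:(lra) ltac:(lra) HlU HL) as LU.
    rewrite Rabs_pos_eq in LU by lra.
    split; apply alg; auto; apply Rabs_le; rewrite h1 in *; rewrite ?pow1 in *; nra.
  -
    subst i. simpl (1 - 1)%nat.
    assert (p0 : p = 0) by (rewrite Hp; change (INR 1) with 1; ring).
    rewrite !cv_0, !cv_in by lia. rewrite Mi, MS, p0.
    assert (h12 : 2 * h <= 1) by (rewrite <- HNh; assert (2 <= INR N) by (apply (le_INR 2); lia); nra).
    fdF F Lam HdF HL HlF h 0 (0 + h/2) x. fdF F Lam HdF HL HlF h 0 (0 + 3*h/2) x. fdU U Lam HdU HL HlU h (0 + h/2) (0 + 3*h/2) 0. rewrite U0 in *.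
    fdU U Lam HdU HL HlU h (0 + h/2) (0 + 3*h/2) x.
    pose proof (lip_abs (Derive U) Lam x 0 ltac:(lra) ltac:(lra) HlU HL) as LU.
    rewrite Rabs_pos_eq in LU by lra.
    split; apply alg; auto; apply Rabs_le; nra.
  -
    subst i.
    assert (pN : p + h = 1) by (rewrite Hp; transitivity (INR N * h); [ring | exact HNh]).
    assert (h12 : 2 * h <= 1) by (rewrite <- HNh; assert (2 <= INR N) by (apply (le_INR 2); lia); nra).
    assert (Mm : mid h (N - 1) = p - h / 2) by (rewrite Hp; unfold mid; rewrite minus_INR by lia; simpl; field).
    rewrite !cv_N, !cv_in by lia. rewrite Mi, Mm.
    fdF F Lam HdF HL HlF h (p - h/2) 1 x. fdF F Lam HdF HL HlF h (p + h/2) 1 x. fdU U Lam HdU HL HlU h (p - h/2) (p + h/2) 1. rewrite U1 in *.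
    fdU U Lam HdU HL HlU h (p - h/2) (p + h/2) x.
    pose proof (lip_abs (Derive U) Lam x 1 ltac:(lra) ltac:(lra) HlU HL) as LU.
    rewrite Rabs_left1 in LU by lra.
    split; apply alg; auto; apply Rabs_le; nra.
  -
    assert (Hp2 : h <= p) by (rewrite Hp; assert (2 <= INR i) by (apply (le_INR 2); lia); nra).
    assert (Hp3 : p + 2 * h <= 1) by (rewrite Hp, <- HNh; assert (INR i + 1 <= INR N) by (rewrite <- S_INR; apply le_INR; lia); nra).
    assert (Mm : mid h (i - 1) = p - h / 2) by (rewrite Hp; unfold mid; rewrite minus_INR by lia; simpl; field).
    rewrite !cv_in by lia. rewrite Mi, MS, Mm.
    fdF F Lam HdF HL HlF h (p - h/2) (p + 3*h/2) x. fdU U Lam HdU HL HlU h (p - h/2) (p + 3*h/2) x.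
    fdU U Lam HdU HL HlU h (p + h/2) (p + 3*h/2) (p + h/2). fdU U Lam HdU HL HlU h (p - h/2) (p + h/2) (p + h/2).
    fdF F Lam HdF HL HlF h (p + h/2) (p + 3*h/2) (p + h/2). fdF F Lam HdF HL HlF h (p - h/2) (p + h/2) (p + h/2).
    split; apply alg; auto; apply Rabs_le; nra.
Qed.

Lemma sum1_le (G : nat -> R) n c : (forall i, (1 <= i <= n)%nat -> G i <= c) -> sum1 G n <= INR n * c.
Proof.
  induction n; intros H; simpl sum1.
  - simpl; lra.
  - rewrite S_INR. assert (G (S n) <= c) by (apply H; lia).
    assert (sum1 G n <= INR n * c) by (apply IHn; intros; apply H; lia). lra.
Qed.

Lemma bnd (f1 f2 : R -> R) c e C M : ex_derive f1 c -> ex_derive f2 c ->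
  Rabs (Derive (fun y => f1 y - e ^ 2 * f2 y) c) <= C * e ^ 3 ->
  Rabs (Derive f2 c) <= M -> 0 < e < 1 ->
  Rabs (Derive f1 c) <= e ^ 2 * (Rabs C + Rabs M).
Proof.
  intros H1 H2 HC HM He.
  rewrite Derive_minus in HC; auto.
  2: apply ex_derive_scal; auto.
  rewrite Derive_scal in HC.
  assert (Hc : C * e^3 <= Rabs C * e ^ 2).
  { assert (e^3 <= e^2) by (simpl; nra). pose proof (Rle_abs C).
    assert (0 < e^2) by (simpl; nra). assert (0 < e^3) by (simpl; nra).
    apply Rle_trans with (Rabs C * e^3). apply Rmult_le_compat_r; lra.
    apply Rmult_le_compat_l. apply Rabs_pos. lra. }
  assert (HM' : M <= Rabs M) by apply Rle_abs.
  pose proof (Rabs_triang (Derive f1 c - e^2 * Derive f2 c) (e^2 * Derive f2 c)) as T.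
  replace (Derive f1 c - e ^ 2 * Derive f2 c + e ^ 2 * Derive f2 c) with (Derive f1 c) in T by ring.
  rewrite Rabs_mult, (Rabs_pos_eq (e^2)) in T by (simpl; nra).
  assert (0 < e^2) by (simpl; nra).
  nra.
Qed.

Lemma sq2 a b B : Rabs a <= B -> Rabs b <= B -> a ^ 2 + b ^ 2 <= 2 * B ^ 2.
Proof.
  intros Ha Hb. apply Rabs_le_between in Ha. apply Rabs_le_between in Hb. nra.
Qed.

Lemma e2f e : 0 < e < 1 -> 0 < e ^ 2 /\ e ^ 2 <= 1.
Proof. intros. simpl. split; nra. Qed.

Lemma abs_sub a b : Rabs (a - b) <= Rabs a + Rabs b.
Proof. unfold Rminus. rewrite <- (Rabs_Ropp b). apply Rabs_triang. Qed.

Lemma cont_sq (f1 f2 : R -> R) c1 c2 z : ex_derive f1 z -> ex_derive f2 z ->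
  ex_derive (fun x => (f1 x - c1) ^ 2 + (f2 x - c2) ^ 2) z.
Proof. intros H1 H2. auto_derive. auto. Qed.

Theorem lemma5
  (CFL : R) (g : R -> R -> R)
  (v u : R -> R -> R -> R)   (* families indexed by epsilon: v eps x t *)
  (v2 u2 : R -> R -> R) :
  (* (A2) *)
  0 < CFL < 1 ->
  (* smoothness of the solutions (for each epsilon) *)
  (forall e x t,
     ex_derive (fun y => v e y t) x /\ ex_derive (fun s => v e x s) t /\
     ex_derive (fun y => dx_ (v e) y t) x /\
     ex_derive (fun y => u e y t) x /\ ex_derive (fun s => u e x s) t /\
     ex_derive (fun y => dx_ (u e) y t) x /\ ex_derive (fun s => dx_ (u e) x s) t) ->
  (* smoothness of the epsilon-independent profiles v^(2), u^(2) *)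
  (forall x t,
     ex_derive (fun y => v2 y t) x /\ ex_derive (fun s => v2 x s) t /\
     ex_derive (fun y => u2 y t) x /\
     ex_derive (fun y => dx_ u2 y t) x /\ ex_derive (fun s => dx_ u2 x s) t) ->
  (* v^(2) and u^(2)_x have finite C^1 norm on Omega x R^+ *)
  (exists M, C1_le v2 M /\ C1_le (dx_ u2) M) ->
  (* the (epsilon-independent) source g is Lipschitz in x, uniformly in t *)
  (exists L, forall x y t, 0 <= x <= 1 -> 0 <= y <= 1 -> 0 <= t ->
     Rabs (g x t - g y t) <= L * Rabs (x - y)) ->
  (* the PDE system on Omega x R^+ *)
  (forall e, 0 < e < 1 -> forall x t, in_dom x t ->
     dt_ (v e) x t - dx_ (u e) x t = 0 /\
     dt_ (u e) x t - / (e ^ 2) * dx_ (v e) x t = g x t) ->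
  (* boundary condition v = 0 on the boundary of Omega *)
  (forall e, 0 < e < 1 -> forall t, 0 <= t -> v e 0 t = 0 /\ v e 1 t = 0) ->
  (* (A1): v = eps^2 v^(2) + O(eps^3), u_x = eps^2 u^(2)_x + O(eps^3) in C^1 *)
  (exists C, forall e, 0 < e < 1 ->
     C1_le (fun x t => v e x t - e ^ 2 * v2 x t) (C * e ^ 3) /\
     C1_le (fun x t => dx_ (u e) x t - e ^ 2 * dx_ u2 x t) (C * e ^ 3)) ->
  (* conclusion: ||w^n_x - tilde w^n_x||_{L^2} = O(eps^2 dx), uniformly *)
  exists K, forall e, 0 < e < 1 -> forall (N n : nat), (0 < N)%nat ->
    let dx := / INR N in
    let dt := CFL * dx in
    L2err (v e) (u e) N dx dt (INR n * dt) <= K * e ^ 2 * dx.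
Proof.
  intros HCFL Hsm Hsm2 [M [HM1 HM2]] [L HL] Hpde Hbd [C HC].
  set (Kmax := Rabs C + Rabs M + Rabs L).
  set (Kc := (24 + 32 / CFL) / 2).
  exists (2 * Kc * Kmax).
  intros e He N n HN dx dt.
  assert (HNr : 0 < INR N) by (apply lt_0_INR; lia).
  assert (Hdx : 0 < dx) by (apply Rinv_0_lt_compat; auto).
  assert (HNh : INR N * dx = 1) by (unfold dx; field; lra).
  set (t := INR n * dt).
  assert (Ht : 0 <= t) by (unfold t, dt; apply Rmult_le_pos; [apply pos_INR | apply Rmult_le_pos; lra]).
  destruct (e2f e He) as [He2 He21].
  assert (HKc : 0 < Kc) by (unfold Kc; assert (0 < 32 / CFL) by (apply Rdiv_lt_0_compat; lra); lra).
  assert (HKm : 0 <= Kmax) by (unfold Kmax; pose proof (Rabs_pos C); pose proof (Rabs_pos M); pose proof (Rabs_pos L); lra).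
  set (Lam := e ^ 2 * Kmax).
  assert (HLam : 0 <= Lam) by (unfold Lam; apply Rmult_le_pos; lra).
  set (F := fun y => v e y t). set (U := fun y => u e y t).
  destruct (HC e He) as [HCv HCu].
  assert (Buxx : forall c, 0 <= c <= 1 ->
     Rabs (Derive (fun y => dx_ (u e) y t) c) <= e ^ 2 * (Rabs C + Rabs M)).
  { intros c Hc.
    apply (bnd _ (fun y => dx_ u2 y t) c e C M).
    - exact (proj1 (proj2 (proj2 (proj2 (proj2 (proj2 (Hsm e c t))))))).
    - exact (proj1 (proj2 (proj2 (proj2 (Hsm2 c t))))).
    - exact (proj1 (proj2 (HCu c t (conj Hc Ht)))).
    - exact (proj1 (proj2 (HM2 c t (conj Hc Ht)))).
    - auto. }
  assert (Buxt : forall z s, 0 <= z <= 1 -> 0 <= s ->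
     Rabs (dt_ (dx_ (u e)) z s) <= e ^ 2 * (Rabs C + Rabs M)).
  { intros z s Hz Hs.
    apply (bnd _ (fun s => dx_ u2 z s) s e C M).
    - exact (proj2 (proj2 (proj2 (proj2 (proj2 (proj2 (Hsm e z s))))))).
    - exact (proj2 (proj2 (proj2 (proj2 (Hsm2 z s))))).
    - exact (proj2 (proj2 (HCu z s (conj Hz Hs)))).
    - exact (proj2 (proj2 (HM2 z s (conj Hz Hs)))).
    - auto. }
  assert (HlU : forall p q, 0 <= p <= 1 -> 0 <= q <= 1 ->
     Rabs (Derive U p - Derive U q) <= Lam * Rabs (p - q)).
  { intros p q Hp Hq.
    apply Rle_trans with (e ^ 2 * (Rabs C + Rabs M) * Rabs (p - q)).
    - apply (mvt_bound (fun y => dx_ (u e) y t) q p).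
      + intros y; exact (proj1 (proj2 (proj2 (proj2 (proj2 (proj2 (Hsm e y t))))))).
      + intros c Hc. apply Buxx. unfold Rmin, Rmax in Hc; destruct (Rle_dec q p); lra.
    - apply Rmult_le_compat_r. apply Rabs_pos. unfold Lam, Kmax.
      apply Rmult_le_compat_l; [lra|]. pose proof (Rabs_pos L); lra. }
  assert (HlF : forall p q, 0 <= p <= 1 -> 0 <= q <= 1 ->
     Rabs (Derive F p - Derive F q) <= Lam * Rabs (p - q)).
  { intros p q Hp Hq.
    destruct (Hpde e He p t (conj Hp Ht)) as [_ Pp].
    destruct (Hpde e He q t (conj Hq Ht)) as [_ Pq].
    change (Derive F p) with (dx_ (v e) p t). change (Derive F q) with (dx_ (v e) q t).
    assert (Ep : dx_ (v e) p t = e ^ 2 * (dt_ (u e) p t - g p t)).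
    { rewrite <- Pp. field. lra. }
    assert (Eq : dx_ (v e) q t = e ^ 2 * (dt_ (u e) q t - g q t)).
    { rewrite <- Pq. field. lra. }
    rewrite Ep, Eq.
    pose proof (dt_lip (u e) (e ^ 2 * (Rabs C + Rabs M)) t p q
      (fun z s => proj1 (proj2 (proj2 (proj2 (Hsm e z s)))))
      (fun z s => proj1 (proj2 (proj2 (proj2 (proj2 (Hsm e z s))))))
      (fun z s => proj2 (proj2 (proj2 (proj2 (proj2 (proj2 (Hsm e z s)))))))
      Buxt Ht Hp Hq) as D1.
    pose proof (HL p q t Hp Hq Ht) as D2.
    replace (e ^ 2 * (dt_ (u e) p t - g p t) - e ^ 2 * (dt_ (u e) q t - g q t))
      with (e ^ 2 * ((dt_ (u e) p t - dt_ (u e) q t) - (g p t - g q t))) by ring.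
    rewrite Rabs_mult, (Rabs_pos_eq (e^2)) by lra.
    unfold Lam. rewrite Rmult_assoc. apply Rmult_le_compat_l; [lra|].
    pose proof (abs_sub (dt_ (u e) p t - dt_ (u e) q t) (g p t - g q t)) as T.
    assert (L * Rabs (p - q) <= Rabs L * Rabs (p - q)) by (apply Rmult_le_compat_r; [apply Rabs_pos | apply Rle_abs]).
    assert (e ^ 2 * (Rabs C + Rabs M) * Rabs (p - q) <= (Rabs C + Rabs M) * Rabs (p - q)).
    { pose proof (Rabs_pos C); pose proof (Rabs_pos M); pose proof (Rabs_pos (p - q)).
      rewrite Rmult_assoc. replace ((Rabs C + Rabs M) * Rabs (p - q)) with (1 * ((Rabs C + Rabs M) * Rabs (p - q))) at 2 by ring.
      apply Rmult_le_compat_r; [apply Rmult_le_pos; lra | lra]. }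
    unfold Kmax. lra. }
  assert (F0 : F 0 = 0) by exact (proj1 (Hbd e He t Ht)).
  assert (F1 : F 1 = 0) by exact (proj2 (Hbd e He t Ht)).
  assert (U0 : Derive U 0 = 0).
  { change (Derive U 0) with (dx_ (u e) 0 t).
    destruct (Hpde e He 0 t ltac:(split; lra)) as [P _].
    assert (dt_ (v e) 0 t = 0).
    { apply (deriv_zero_right (fun s => v e 0 s) t); auto.
      - intros s Hs. exact (proj1 (Hbd e He s Hs)).
      - apply Derive_correct. exact (proj1 (proj2 (Hsm e 0 t))). }
    lra. }
  assert (U1 : Derive U 1 = 0).
  { change (Derive U 1) with (dx_ (u e) 1 t).
    destruct (Hpde e He 1 t ltac:(split; lra)) as [P _].
    assert (dt_ (v e) 1 t = 0).
    { apply (deriv_zero_right (fun s => v e 1 s) t); auto.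
      - intros s Hs. exact (proj2 (Hbd e He s Hs)).
      - apply Derive_correct. exact (proj1 (proj2 (Hsm e 1 t))). }
    lra. }
  set (B := Kc * Lam * dx).
  assert (HB : 0 <= B) by (unfold B; apply Rmult_le_pos; [apply Rmult_le_pos|]; lra).
  unfold L2err. cbv zeta.
  apply Rle_trans with (sqrt ((2 * Kc * Kmax * e ^ 2 * dx) ^ 2)).
  2: { rewrite sqrt_pow2; [lra|]. apply Rmult_le_pos; [|lra]. apply Rmult_le_pos; [|lra].
        apply Rmult_le_pos; [|lra]. lra. }
  apply sqrt_le_1_alt.
  apply Rle_trans with (INR N * (dx * (2 * B ^ 2))).
  - apply sum1_le. intros i Hi.
    eapply Rle_trans; [apply Rle_abs|].
    assert (Hnd : node dx (S i) - node dx i = dx) by (unfold node; rewrite S_INR; ring).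
    replace (dx * (2 * B ^ 2)) with ((node dx (S i) - node dx i) * (2 * B ^ 2)) by (rewrite Hnd; reflexivity).
    apply abs_RInt_le_const.
    + lra.
    + apply (ex_RInt_continuous (V:=R_CompleteNormedModule)). intros z _.
      apply (ex_derive_continuous (K:=R_AbsRing) (V:=R_NormedModule)).
      apply (cont_sq (fun y => dx_ (v e) y t) (fun y => dx_ (u e) y t)).
      * exact (proj1 (proj2 (proj2 (Hsm e z t)))).
      * exact (proj1 (proj2 (proj2 (proj2 (proj2 (proj2 (Hsm e z t))))))).
    + intros z Hz.
      destruct (core F U Lam CFL (fun p => proj1 (Hsm e p t)) (fun p => proj1 (proj2 (proj2 (proj2 (Hsm e p t)))))
                 HLam (proj1 HCFL) HlF HlU F0 F1 U0 U1 N i z Hi Hz) as [Z1 Z2].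
      fold dx in Z1, Z2. fold Kc in Z1, Z2. fold B in Z1, Z2.
      change (CFL * dx) with dt in Z1, Z2.
      assert (Hs := sq2 _ _ _ Z1 Z2).
      rewrite Rabs_pos_eq; [exact Hs|].
      apply Rplus_le_le_0_compat; apply pow2_ge_0.
  - rewrite <- Rmult_assoc, HNh. unfold B, Lam.
    replace ((2 * Kc * Kmax * e ^ 2 * dx) ^ 2) with (4 * (Kc * (e ^ 2 * Kmax) * dx) ^ 2) by ring.
    rewrite Rmult_1_l. pose proof (pow2_ge_0 (Kc * (e ^ 2 * Kmax) * dx)). lra.
Qed.
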